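(* Let $n\ge1$, $H\in\mathbb{R}^{n\times n}$ symmetric positive semidefinite, $h\in\mathbb{R}^n$, $\lambda>0$, and let $(z^k,v^k,s^k)_{k\ge0}$ be the iterates of the predictor–corrector algorithm described in the context, started from a point $(z^0,v^0,s^0)\in\mathcal{N}(1/4)$. Then at every iteration $k$, \[ \Delta\mu_p\le\frac14\mu^k,\qquad \hat\mu^k\le\Big(1-\frac{\alpha^k}{2}\Big)^2\mu^k,\qquad \Delta\mu_c\le\Big(1-\frac{\alpha^k}{2}\Big)^2\frac{1}{16n}\mu^k . \]
   Context: Box-QP: $\min_{z}\frac12 z^\top Hz+z^\top h$ s.t. $-\mathbf{1}_n\le z\le\mathbf{1}_n$, objective scaled by $2\lambda$. Variables: $z\in\mathbb{R}^n$, $v=(\gamma,\theta)\in\mathbb{R}^{2n}$, $s=(\phi,\psi)\in\mathbb{R}^{2n}$. $\mathcal{F}^+=\{(z,v,s): 2\lambda Hz+2\lambda h+\gamma-\theta=0,\ z+\phi-\mathbf{1}_n=0,\ z-\psi+\mathbf{1}_n=0,\ (\gamma,\theta,\phi,\psi)>0\}$; for $\beta\in[0,1]$, $\mathcal{N}(\beta)=\{(z,v,s)\in\mathcal{F}^+:\|v\odot s-\mu\mathbf{1}_{2n}\|\le\beta\mu\}$, $\mu=\frac{v^\top s}{2n}$. With $\Omega=[I_n,-I_n]$, the Newton system at $(z,v,s)$ with parameters $\sigma,\mu$ is $(2\lambda H)\Delta z+\Omega\Delta v=0$, $\Omega^\top\Delta z+\Delta s=0$, $s\odot\Delta v+v\odot\Delta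 s=\sigma\mu\mathbf{1}_{2n}-v\odot s$. Algorithm, iteration $k$: set $\mu^k=\frac{(v^k)^\top s^k}{2n}$; let $(\Delta z_p,\Delta v_p,\Delta s_p)$ solve the Newton system at $(z^k,v^k,s^k)$ with $\sigma=0$, $\mu=\mu^k$; $\Delta\mu_p=\frac{\Delta v_p^\top\Delta s_p}{2n}$; $\alpha^k=\min\big(\frac12,\sqrt{\mu^k/(8\|\Delta v_p\odot\Delta s_p-\Delta\mu_p\mathbf{1}_{2n}\|)}\big)$ (square-root term read as $+\infty$ if the norm is $0$); $(\hat z^k,\hat v^k,\hat s^k)=(z^k,v^k,s^k)+\alpha^k(\Delta z_p,\Delta v_p,\Delta s_p)$; $\hat\mu^k=\frac{(\hat v^k)^\top\hat s^k}{2n}$; let $(\Delta z_c,\Delta v_c,\Delta s_c)$ solve the Newton system at $(\hat z^k,\hat v^k,\hat s^k)$ with $\sigma=1$, $\mu=\hat\mu^k$; $\Delta\mu_c=\frac{\Delta v_c^\top\Delta s_c}{2n}$; $(z^{k+1},v^{k+1},s^{k+1})=(\hat z^k,\hat v^k,\hat s^k)+(\Delta z_c,\Delta v_c,\Delta s_c)$. $\odot$ is the Hadamard product, $\|\cdot\|$ the Euclidean norm. *)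

(* Defs.v *)
(* R is an arbitrary real closed field (needed for Num.sqrt);
   vectors of R^m are column vectors 'cV[R]_m. *)
From HB Require Import structures.
From mathcomp Require Import all_boot all_order all_algebra.
Set Implicit Arguments. Unset Strict Implicit. Unset Printing Implicit Defensive.
Import Order.TTheory GRing.Theory Num.Theory.
Local Open Scope ring_scope.

Section BoxQP.
Variable R : rcfType.

Definition had m (u w : 'cV[R]_m) : 'cV[R]_m := \col_i (u i 0 * w i 0).

Definition enorm m (u : 'cV[R]_m) : R := Num.sqrt (\sum_i (u i 0) ^+ 2).

Definition dotv m (u w : 'cV[R]_m) : R := \sum_i u i 0 * w i 0.

Definition cst m (c : R) : 'cV[R]_m := const_mx c.

Definition Omega n : 'M[R]_(n, n + n) := row_mx 1%:M (- 1%:M).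

Definition mu_of n (v s : 'cV[R]_(n + n)) : R := dotv v s / (2 * n)%:R.

Definition posv m (u : 'cV[R]_m) : Prop := forall i, 0 < u i 0.

Definition Fplus n (H : 'M[R]_n) (h : 'cV[R]_n) (lam : R)
    (z : 'cV[R]_n) (v s : 'cV[R]_(n + n)) : Prop :=
  let gam := usubmx v in let th := dsubmx v in
  let phi := usubmx s in let psi := dsubmx s in
  [/\ (2 * lam) *: (H *m z) + (2 * lam) *: h + gam - th = 0,
      z + phi - cst n 1 = 0,
      z - psi + cst n 1 = 0 &
      posv v /\ posv s].

Definition Nbhd n (H : 'M[R]_n) (h : 'cV[R]_n) (lam beta : R)
    (z : 'cV[R]_n) (v s : 'cV[R]_(n + n)) : Prop :=
  Fplus H h lam z v s /\
  enorm (had v s - cst (n + n) (mu_of v s)) <= beta * mu_of v s.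

Definition newton n (H : 'M[R]_n) (lam : R)
    (z : 'cV[R]_n) (v s : 'cV[R]_(n + n)) (sigma mu : R)
    (dz : 'cV[R]_n) (dv ds : 'cV[R]_(n + n)) : Prop :=
  [/\ (2 * lam) *: (H *m dz) + Omega n *m dv = 0,
      (Omega n)^T *m dz + ds = 0 &
      had s dv + had v ds = cst (n + n) (sigma * mu) - had v s].

(* step length alpha = min(1/2, sqrt(mu/(8 ||dv o ds - dmu 1||))),
   the square-root term being +infinity when the norm is 0 *)
Definition alpha_of n (mu : R) (dvp dsp : 'cV[R]_(n + n)) : R :=
  let nr := enorm (had dvp dsp - cst (n + n) (mu_of dvp dsp)) in
  if nr == 0 then 2^-1 else Num.min (2^-1) (Num.sqrt (mu / (8 * nr))).

End BoxQP.

(* Main.v *)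
Require Import Defs.
From HB Require Import structures.
From mathcomp Require Import all_boot all_order all_algebra.
From mathcomp Require Import ring lra.
Import Order.TTheory GRing.Theory Num.Theory.
Local Open Scope ring_scope.


Section Core.
Variable R : realFieldType.
Variable m : nat.
Hypothesis hm : (0 < m)%N.
Local Notation M := (m%:R : R).

Lemma Mgt0 : 0 < M. Proof. by rewrite ltr0n. Qed.

Lemma sum_const (c : R) : \sum_(i < m) c = c * M.
Proof. by rewrite sumr_const card_ord mulr_natr. Qed.

Lemma le_sum1 (f : 'I_m -> R) j : (forall i, 0 <= f i) -> f j <= \sum_i f i.
Proof.
move=> h; rewrite (bigD1 j) //= lerDl; apply: sumr_ge0 => i _; exact: h.
Qed.

Lemma sq_sum (f : 'I_m -> R) : (forall i, 0 <= f i) ->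
  \sum_i f i ^+ 2 <= (\sum_i f i) ^+ 2.
Proof.
move=> h; rewrite [X in _ <= X]expr2 mulr_suml; apply: ler_sum => i _.
rewrite expr2; apply: ler_wpM2l => //; exact: le_sum1.
Qed.

Lemma var_le (f : 'I_m -> R) c : c = (\sum_i f i) / M ->
  \sum_i (f i - c) ^+ 2 <= \sum_i f i ^+ 2.
Proof.
move=> hc.
have E : forall i, (f i - c) ^+ 2 = f i ^+ 2 + (- (2 * c) * f i + c ^+ 2).
  move=> i; ring.
rewrite (eq_bigr _ (fun i _ => E i)) big_split /= big_split /= -mulr_sumr sum_const.
have hF : \sum_i f i = c * M by rewrite hc mulfVK // gt_eqF // Mgt0.
rewrite hF.
have := mulr_ge0 (sqr_ge0 c) (ltW Mgt0). lra.
Qed.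

Lemma sq_bound (x y : R) : 0 <= y -> x ^+ 2 <= y ^+ 2 -> -y <= x <= y.
Proof.
move=> hy hxy; rewrite -ler_norml -(@ler_pXn2r _ 2) //.
- by rewrite real_normK // num_real.
- by rewrite nnegrE normr_ge0.
Qed.

Lemma path1 (v dv T : R) : 0 < v -> 0 <= T ->
  (forall t, 0 <= t -> t <= T -> v + t * dv != 0) -> 0 < v + T * dv.
Proof.
move=> hv hT h; rewrite ltNge; apply/negP => hle.
have hdv : dv < 0.
  rewrite ltNge; apply/negP => hd.
  have := mulr_ge0 hT hd. lra.
pose t0 := v / (- dv).
have hdv' : 0 < - dv by rewrite oppr_gt0.
have ht0 : 0 <= t0 by rewrite /t0 divr_ge0 // ltW.
have ht0T : t0 <= T.
  rewrite /t0 ler_pdivrMr //. lra.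
have := h t0 ht0 ht0T; rewrite /t0 invrN mulrN mulNr divfK ?subrr ?eqxx //.
by rewrite ltr0_neq0.
Qed.

Lemma path2 (v s dv ds T : R) : 0 < v -> 0 < s -> 0 <= T ->
  (forall t, 0 <= t -> t <= T -> 0 < (v + t * dv) * (s + t * ds)) ->
  0 < v + T * dv /\ 0 < s + T * ds.
Proof.
move=> hv hs hT h; split; apply: path1 => // t h0 h1; have := h t h0 h1;
  apply: contraTneq => ->; by rewrite ?mul0r ?mulr0 ltxx.
Qed.

Lemma comp_bound (v s dv ds r : R) : 0 < v * s -> s * dv + v * ds = r ->
  4 * ((v * s) * (dv * ds)) <= r ^+ 2.
Proof. move=> h1 h2. have := sqr_ge0 (s * dv - v * ds). rewrite -h2. lra. Qed.


Lemma avg_le (A B : R) : A <= B -> A / M <= B / M.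
Proof. move=> h; apply: ler_wpM2r => //; by rewrite invr_ge0 ltW // Mgt0. Qed.

Lemma sum_eq (f : 'I_m -> R) c : c = (\sum_i f i) / M -> \sum_i f i = c * M.
Proof. by move=> ->; rewrite mulfVK // gt_eqF // Mgt0. Qed.

Lemma from_sum (f : 'I_m -> R) c : 0 < c ->
  \sum_i (f i - c) ^+ 2 <= (c / 2) ^+ 2 -> forall i, c / 2 <= f i.
Proof.
move=> hc hS i.
have h : (f i - c) ^+ 2 <= (c / 2) ^+ 2.
  apply: le_trans hS; apply: (le_sum1 (fun i => (f i - c) ^+ 2)) => j.
  exact: sqr_ge0.
have hc2 : 0 <= c / 2 by lra.
have /andP [h1 h2] := sq_bound _ _ hc2 h; lra.
Qed.

Section Pred.
Variables (v s dv ds : 'I_m -> R) (mu dmu : R).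
Hypothesis hmu : mu = (\sum_i v i * s i) / M.
Hypothesis hdmu : dmu = (\sum_i dv i * ds i) / M.
Hypothesis hpos : forall i, 0 < v i * s i.
Hypothesis he : forall i, s i * dv i + v i * ds i = - (v i * s i).

Lemma pred_mu : dmu <= mu / 4.
Proof.
have h : forall i, dv i * ds i <= v i * s i / 4.
  move=> i; have := comp_bound _ _ _ _ _ (hpos i) (he i); rewrite sqrrN => H.
  have : 0 <= (v i * s i) * (v i * s i - 4 * (dv i * ds i)) by lra.
  rewrite pmulr_rge0 // => H2; lra.
have H : \sum_i dv i * ds i <= (\sum_i v i * s i) / 4.
  by rewrite mulr_suml; apply: ler_sum => i _; exact: h i.
rewrite hdmu hmu mulrAC; exact: avg_le.
Qed.

Lemma mu_t t muT : muT = (\sum_i (v i + t * dv i) * (s i + t * ds i)) / M ->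
  muT = (1 - t) * mu + t ^+ 2 * dmu.
Proof.
move=> ->.
have E : forall i, (v i + t * dv i) * (s i + t * ds i) =
   (1 - t) * (v i * s i) + t ^+ 2 * (dv i * ds i).
  move=> i; transitivity (v i * s i + t * (s i * dv i + v i * ds i)
     + t ^+ 2 * (dv i * ds i)); first ring.
  rewrite he; ring.
rewrite (eq_bigr _ (fun i _ => E i)) big_split /= -!mulr_sumr hmu hdmu; ring.
Qed.

Lemma dev_t t muT : muT = (1 - t) * mu + t ^+ 2 * dmu -> forall i,
  (v i + t * dv i) * (s i + t * ds i) - muT =
  (1 - t) * (v i * s i - mu) + t ^+ 2 * (dv i * ds i - dmu).
Proof.
move=> -> i; transitivity (v i * s i + t * (s i * dv i + v i * ds i)
     + t ^+ 2 * (dv i * ds i) - ((1 - t) * mu + t ^+ 2 * dmu)); first ring.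
rewrite he; ring.
Qed.

Lemma pred_nbhd t muT nr : 0 < mu ->
  \sum_i (v i * s i - mu) ^+ 2 <= (mu / 4) ^+ 2 ->
  0 <= dmu -> 0 <= nr -> nr ^+ 2 = \sum_i (dv i * ds i - dmu) ^+ 2 ->
  0 <= t -> t <= 2^-1 -> t ^+ 2 * nr <= mu / 8 ->
  muT = (1 - t) * mu + t ^+ 2 * dmu ->
  \sum_i ((v i + t * dv i) * (s i + t * ds i) - muT) ^+ 2 <= (muT / 2) ^+ 2.
Proof.
move=> hmu0 hS1 hdmu0 hnr hnr2 ht0 ht1 htnr hmuT.
under eq_bigr => i _ do rewrite (@dev_t t muT hmuT i).
have E : forall i, ((1 - t) * (v i * s i - mu) + t ^+ 2 * (dv i * ds i - dmu)) ^+ 2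
   <= 2 * (1 - t) ^+ 2 * (v i * s i - mu) ^+ 2
      + 2 * (t ^+ 2) ^+ 2 * (dv i * ds i - dmu) ^+ 2.
  move=> i; have := sqr_ge0 ((1 - t) * (v i * s i - mu) - t ^+ 2 * (dv i * ds i - dmu)).
  lra.
apply: le_trans; first by apply: ler_sum => i _; exact: E i.
rewrite big_split /= -!mulr_sumr -hnr2.
set u := 1 - t.
have hu0 : 2^-1 <= u by rewrite /u; lra.
have hB : 0 <= t ^+ 2 * nr by rewrite mulr_ge0 // sqr_ge0.
have hB2 : (t ^+ 2 * nr) ^+ 2 <= (mu / 8) ^+ 2.
  rewrite ler_pXn2r // ?nnegrE //; lra.
have h1 : 2 * u ^+ 2 * \sum_i (v i * s i - mu) ^+ 2 <= 2 * u ^+ 2 * (mu / 4) ^+ 2.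
  by apply: ler_wpM2l => //; rewrite mulr_ge0 // sqr_ge0.
have hmuT2 : u * mu <= muT.
  by rewrite hmuT -/u lerDl mulr_ge0 // sqr_ge0.
have hsq : (u * mu) ^+ 2 <= muT ^+ 2.
  rewrite ler_pXn2r // ?nnegrE //; last by apply: le_trans hmuT2; rewrite mulr_ge0 //; lra.
  rewrite mulr_ge0 //; lra.
have hu2 : 0 <= (u ^+ 2 - 4^-1) * mu ^+ 2.
  rewrite mulr_ge0 // ?sqr_ge0 //.
  have : 0 <= (u - 2^-1) * (u + 2^-1) by rewrite mulr_ge0 //; lra.
  lra.
have -> : 2 * (t ^+ 2) ^+ 2 * nr ^+ 2 = 2 * (t ^+ 2 * nr) ^+ 2 by ring.
lra.
Qed.

End Pred.

Section Corr.
Variables (vh sh dv ds : 'I_m -> R) (muh : R).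
Hypothesis hmuh0 : 0 < muh.
Hypothesis hx : forall i, muh / 2 <= vh i * sh i.
Hypothesis hS : \sum_i (vh i * sh i - muh) ^+ 2 <= (muh / 2) ^+ 2.
Hypothesis he : forall i, sh i * dv i + vh i * ds i = muh - vh i * sh i.
Hypothesis hp : 0 <= \sum_i dv i * ds i.

Lemma corr_g i : dv i * ds i <= (muh - vh i * sh i) ^+ 2 / (2 * muh).
Proof.
have hxi := hx i. have hmu0 := hmuh0.
have hpos : 0 < vh i * sh i by lra.
have H := comp_bound _ _ _ _ _ hpos (he i).
case: (lerP 0 (dv i * ds i)) => hq.
  rewrite ler_pdivlMr; last by lra.
  have : 2 * muh * (dv i * ds i) <= 4 * (vh i * sh i * (dv i * ds i)).
    have -> : 4 * (vh i * sh i * (dv i * ds i)) = 4 * (vh i * sh i) * (dv i * ds i) by ring.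
    apply: ler_wpM2r => //; lra.
  lra.
apply: le_trans (ltW hq) _; apply: divr_ge0; [exact: sqr_ge0 | by rewrite mulr_ge0 // ltW].
Qed.

Lemma corr_sumg : \sum_i (muh - vh i * sh i) ^+ 2 / (2 * muh) <= muh / 8.
Proof.
have hmu0 := hmuh0. rewrite -mulr_suml.
have hmn : muh != 0 by rewrite gt_eqF. have -> : muh / 8 = (muh / 2) ^+ 2 / (2 * muh) by field; rewrite hmn ?pnatr_eq0.  
apply: ler_wpM2r; first by rewrite invr_ge0; lra.
rewrite (eq_bigr (fun i => (vh i * sh i - muh) ^+ 2)) //.
by move=> i _; rewrite -sqrrN opprB.
Qed.

Lemma corr_sum : \sum_i dv i * ds i <= muh / 8.
Proof. have hmu0 := hmuh0. apply: le_trans corr_sumg; apply: ler_sum => i _; exact: corr_g. Qed.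

Lemma corr_abs : \sum_i `|dv i * ds i| <= muh / 4.
Proof.
have h : forall i, `|dv i * ds i| <=
    2 * ((muh - vh i * sh i) ^+ 2 / (2 * muh)) - dv i * ds i.
  move=> i; have := corr_g i. have hmu0 := hmuh0.
  have hg : 0 <= (muh - vh i * sh i) ^+ 2 / (2 * muh).
    rewrite divr_ge0 ?sqr_ge0 //; lra.
  case: (lerP 0 (dv i * ds i)) => hq.
    rewrite ger0_norm //; lra.
  rewrite ltr0_norm //; lra.
apply: le_trans; first by apply: ler_sum => i _; exact: h i.
rewrite sumrB -mulr_sumr.
have := corr_sumg; have := hp; lra.
Qed.

Lemma corr_next mup : mup = (\sum_i (vh i + dv i) * (sh i + ds i)) / M ->
  (forall i, 0 < vh i) -> (forall i, 0 < sh i) ->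
  [/\ forall i, 0 < vh i + dv i, forall i, 0 < sh i + ds i &
      \sum_i ((vh i + dv i) * (sh i + ds i) - mup) ^+ 2 <= (mup / 4) ^+ 2].
Proof.
move=> hmup hv hs. have hmu0 := hmuh0.
have E : forall i, (vh i + dv i) * (sh i + ds i) = muh + dv i * ds i.
  move=> i; transitivity (vh i * sh i + (sh i * dv i + vh i * ds i) + dv i * ds i);
    first ring.
  rewrite he; ring.
have hmup' : mup = muh + (\sum_i dv i * ds i) / M.
  rewrite hmup (eq_bigr _ (fun i _ => E i)) big_split /= sum_const mulrDl mulfK //.
  by rewrite gt_eqF // Mgt0.
have hA := corr_abs.
have habs : forall i, `|dv i * ds i| <= muh / 4.
  move=> i; apply: le_trans hA; apply: (le_sum1 (fun i => `|dv i * ds i|)) => j.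
  exact: normr_ge0.
have hdm : 0 <= (\sum_i dv i * ds i) / M by rewrite divr_ge0 // ltW // Mgt0.
have hpath : forall i, 0 < vh i + 1 * dv i /\ 0 < sh i + 1 * ds i.
  move=> i; apply: path2; [exact: hv | exact: hs | exact: ler01 | ].
  move=> t ht0 ht1.
  have -> : (vh i + t * dv i) * (sh i + t * ds i) =
     (1 - t) * (vh i * sh i) + t * muh + t ^+ 2 * (dv i * ds i).
    transitivity (vh i * sh i + t * (sh i * dv i + vh i * ds i)
      + t ^+ 2 * (dv i * ds i)); first ring.
    rewrite he; ring.
  have := habs i; rewrite ler_norml => /andP [hq1 hq2].
  have h1 : (1 - t) * (muh / 2) <= (1 - t) * (vh i * sh i).
    apply: ler_wpM2l; [lra | exact: hx].
  have h2 : 0 <= t ^+ 2 * (dv i * ds i + muh / 4) by rewrite mulr_ge0 ?sqr_ge0 //; lra.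
  have h3 : t ^+ 2 <= 1 by rewrite expr2; have := ler_wpM2l ht0 ht1; lra.
  have h4 : t ^+ 2 * (muh / 4) <= 1 * (muh / 4) by apply: ler_wpM2r => //; lra.
  have h5 : 0 <= t * muh by rewrite mulr_ge0 // ltW.
  lra.
split.
- by move=> i; have [h _] := hpath i; rewrite mul1r in h.
- by move=> i; have [_ h] := hpath i; rewrite mul1r in h.
rewrite hmup'.
set c := (\sum_i dv i * ds i) / M.
under eq_bigr => i _ do rewrite E.
have -> : \sum_i (muh + dv i * ds i - (muh + c)) ^+ 2 =
          \sum_i (dv i * ds i - c) ^+ 2.
  by apply: eq_bigr => i _; congr (_ ^+ 2); ring.
apply: le_trans; first exact: var_le.
have -> : \sum_i (dv i * ds i) ^+ 2 = \sum_i `|dv i * ds i| ^+ 2.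
  by apply: eq_bigr => i _; rewrite real_normK // num_real.
apply: le_trans; first by apply: sq_sum => i; exact: normr_ge0.
have hc : 0 <= c := hdm.
rewrite ler_pXn2r // ?nnegrE.
all: try (apply: sumr_ge0 => i _; exact: normr_ge0).
all: try (apply: divr_ge0; lra).
lra.
Qed.

End Corr.
End Core.


Section Conv.
Variable R : rcfType.
Variable n : nat.

Lemma mu_ofE (v s : 'cV[R]_(n + n)) :
  mu_of v s = (\sum_i v i 0 * s i 0) / (n + n)%:R.
Proof. by rewrite /mu_of /dotv mul2n -addnn. Qed.

Lemma enorm_sq m (u : 'cV[R]_m) : enorm u ^+ 2 = \sum_i u i 0 ^+ 2.
Proof. by rewrite /enorm sqr_sqrtr // sumr_ge0 // => i _; exact: sqr_ge0. Qed.

Lemma enorm_ge0 m (u : 'cV[R]_m) : 0 <= enorm u.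
Proof. exact: sqrtr_ge0. Qed.

Lemma devE m (v s : 'cV[R]_m) c i :
  (had v s - cst m c) i 0 = v i 0 * s i 0 - c.
Proof. by rewrite !mxE. Qed.

Lemma newton_comp (H : 'M[R]_n) lam z (v s : 'cV[R]_(n + n)) sig mu dz dv ds :
  newton H lam z v s sig mu dz dv ds ->
  forall i, s i 0 * dv i 0 + v i 0 * ds i 0 = sig * mu - v i 0 * s i 0.
Proof.
case=> _ _ e3 i; have := congr1 (fun A : 'cV[R]_(n + n) => A i 0) e3.
by rewrite !mxE.
Qed.

Lemma newton_dot (H : 'M[R]_n) lam z (v s : 'cV[R]_(n + n)) sig mu dz dv ds :
  H^T = H -> (forall x : 'cV[R]_n, 0 <= (x^T *m H *m x) 0 0) -> 0 < lam ->
  newton H lam z v s sig mu dz dv ds ->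
  0 <= \sum_i dv i 0 * ds i 0.
Proof.
move=> HT Hpsd hlam [e1 e2 _].
have -> : \sum_i dv i 0 * ds i 0 = (dv^T *m ds) 0 0.
  by rewrite !mxE; apply: eq_bigr => i _; rewrite mxE.
have -> : ds = - ((Omega R n)^T *m dz).
  by apply: (addrI ((Omega R n)^T *m dz)); rewrite e2 subrr.
have eO : Omega R n *m dv = - ((2 * lam) *: (H *m dz)).
  by apply: (addrI ((2 * lam) *: (H *m dz))); rewrite e1 subrr.
rewrite mulmxN mulmxA -trmx_mul eO linearN /= linearZ /= mulNmx opprK.
rewrite -scalemxAl trmx_mul HT mxE.
by apply: mulr_ge0; [rewrite mulr_ge0 // ltW | exact: Hpsd].
Qed.

End Conv.
Arguments mu_ofE {R n}. Arguments newton_comp {R n H lam z v s sig mu dz dv ds}.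
Arguments newton_dot {R n H lam z v s sig mu dz dv ds}.
Arguments enorm_ge0 {R m}. Arguments enorm_sq {R m}. Arguments devE {R m}.


Definition Inv (R : rcfType) n (v s : 'cV[R]_(n + n)) :=
  [/\ forall i, 0 < v i 0, forall i, 0 < s i 0 &
      \sum_i (v i 0 * s i 0 - mu_of v s) ^+ 2 <= (mu_of v s / 4) ^+ 2].
Arguments Inv {R n}.

Lemma step (R : rcfType) n (hn : (0 < n)%N) (H : 'M[R]_n) lam (z zh : 'cV_n)
  (v s dvp dsp dvc dsc v' s' : 'cV_(n + n)) (dzp dzc : 'cV_n) :
  H^T = H -> (forall x : 'cV[R]_n, 0 <= (x^T *m H *m x) 0 0) -> 0 < lam ->
  Inv v s ->
  let mu := mu_of v s in let al := alpha_of mu dvp dsp in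
  let vh := v + al *: dvp in let sh := s + al *: dsp in
  newton H lam z v s 0 mu dzp dvp dsp ->
  newton H lam zh vh sh 1 (mu_of vh sh) dzc dvc dsc ->
  v' = vh + dvc -> s' = sh + dsc ->
  [/\ mu_of dvp dsp <= 4^-1 * mu, mu_of vh sh <= (1 - al / 2) ^+ 2 * mu,
      mu_of dvc dsc <= (1 - al / 2) ^+ 2 * (16 * n%:R)^-1 * mu & Inv v' s'].
Proof.
move=> HT Hpsd hlam [hv hs hdev] mu al vh sh e1 e2 ev es.
have hm : (0 < n + n)%N by rewrite addn_gt0 hn.
have hM : 0 < ((n + n)%:R : R) by rewrite ltr0n.
have hmuE : mu = (\sum_i v i 0 * s i 0) / (n + n)%:R := mu_ofE _ _.
have hpos : forall i, 0 < v i 0 * s i 0 by move=> i; rewrite mulr_gt0.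
have heP : forall i, s i 0 * dvp i 0 + v i 0 * dsp i 0 = - (v i 0 * s i 0).
  by move=> i; rewrite (newton_comp e1) mul0r sub0r.
set dmu := mu_of dvp dsp.
have hdmuE : dmu = (\sum_i dvp i 0 * dsp i 0) / (n + n)%:R := mu_ofE _ _.
have hdmu0 : 0 <= dmu.
  by rewrite hdmuE divr_ge0 ?ler0n // (newton_dot HT Hpsd hlam e1).
have hmu0 : 0 < mu.
  rewrite hmuE divr_gt0 //; apply: lt_le_trans (hpos (Ordinal hm)) _.
  apply: (@le_sum1 R (n + n) (fun i => v i 0 * s i 0)) => i; exact: ltW.
have hp1 : dmu <= mu / 4 :=
  @pred_mu R (n + n) hm (fun i => v i 0) (fun i => s i 0) (fun i => dvp i 0)
    (fun i => dsp i 0) mu dmu hmuE hdmuE hpos heP.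
set nr := enorm (had dvp dsp - cst (n + n) dmu).
have hnr0 : 0 <= nr := enorm_ge0 _.
have hnr2 : nr ^+ 2 = \sum_i (dvp i 0 * dsp i 0 - dmu) ^+ 2.
  by rewrite /nr enorm_sq; apply: eq_bigr => i _; rewrite devE.
have [hal0 hal1 halnr] : [/\ 0 <= al, al <= 2^-1 & al ^+ 2 * nr <= mu / 8].
  rewrite /al /alpha_of -/dmu -/nr; case: ifP => hnr.
    rewrite (eqP hnr) mulr0; split; [lra | lra | by rewrite divr_ge0 // ltW].
  have hnrp : 0 < nr by rewrite lt0r hnr hnr0.
  have hq0 : 0 <= mu / (8 * nr) by apply: divr_ge0; [exact: ltW | by rewrite mulr_ge0].
  split.
  - by rewrite le_min sqrtr_ge0 andbT; lra.
  - by rewrite ge_min lexx.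
  - have h1 : Num.min 2^-1 (Num.sqrt (mu / (8 * nr))) <= Num.sqrt (mu / (8 * nr)).
      by rewrite ge_min lexx orbT.
    have h0 : 0 <= Num.min 2^-1 (Num.sqrt (mu / (8 * nr))).
      by rewrite le_min sqrtr_ge0 andbT; lra.
    have h2 : (Num.min 2^-1 (Num.sqrt (mu / (8 * nr)))) ^+ 2 <= mu / (8 * nr).
      by rewrite -[X in _ <= X](sqr_sqrtr hq0) !expr2; apply: ler_pM.
    have := ler_wpM2r (ltW hnrp) h2.
    have -> : mu / (8 * nr) * nr = mu / 8 by field; rewrite gt_eqF.
    done.
have vhE : forall i, vh i 0 = v i 0 + al * dvp i 0 by move=> i; rewrite /vh !mxE.
have shE : forall i, sh i 0 = s i 0 + al * dsp i 0 by move=> i; rewrite /sh !mxE.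
set muh := mu_of vh sh.
have hmuhE : muh = (\sum_i (v i 0 + al * dvp i 0) * (s i 0 + al * dsp i 0)) / (n + n)%:R.
  by rewrite /muh mu_ofE; congr (_ / _); apply: eq_bigr => i _; rewrite vhE shE.
have hmuh : muh = (1 - al) * mu + al ^+ 2 * dmu :=
  @mu_t R (n + n) (fun i => v i 0) (fun i => s i 0) (fun i => dvp i 0)
    (fun i => dsp i 0) mu dmu hmuE hdmuE heP al muh hmuhE.
have hmuh_le : muh <= (1 - al / 2) ^+ 2 * mu.
  have : al ^+ 2 * dmu <= al ^+ 2 * (mu / 4) by apply: ler_wpM2l; rewrite ?sqr_ge0.
  rewrite hmuh.
  have -> : (1 - al / 2) ^+ 2 * mu = (1 - al) * mu + al ^+ 2 * (mu / 4) by field.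
  lra.
have hmuh0 : 0 < muh.
  rewrite hmuh; have : 0 <= al ^+ 2 * dmu by rewrite mulr_ge0 ?sqr_ge0.
  have : 0 < (1 - al) * mu by rewrite mulr_gt0 //; lra.
  lra.
have hpath : forall i t, 0 <= t -> t <= al ->
    0 < (v i 0 + t * dvp i 0) * (s i 0 + t * dsp i 0).
  move=> i t ht0 ht1.
  pose muT := (1 - t) * mu + t ^+ 2 * dmu.
  have hmuT0 : 0 < muT.
    rewrite /muT; have : 0 <= t ^+ 2 * dmu by rewrite mulr_ge0 ?sqr_ge0.
    have : 0 < (1 - t) * mu by rewrite mulr_gt0 //; lra.
    lra.
  have htnr : t ^+ 2 * nr <= mu / 8.
    apply: le_trans halnr; apply: ler_wpM2r => //.
    by rewrite !expr2; apply: ler_pM.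
  have ht2 : t <= 2^-1 by lra.
  have hS := @pred_nbhd R (n + n) (fun i => v i 0) (fun i => s i 0)
    (fun i => dvp i 0) (fun i => dsp i 0) mu dmu heP t muT nr hmu0 hdev hdmu0
    hnr0 hnr2 ht0 ht2 htnr erefl.
  have := @from_sum R (n + n)
    (fun i => (v i 0 + t * dvp i 0) * (s i 0 + t * dsp i 0)) muT hmuT0 hS i.
  rewrite /=; lra.
have hvh : forall i, 0 < vh i 0 /\ 0 < sh i 0.
  move=> i; rewrite vhE shE; apply: path2; [exact: hv | exact: hs | exact: hal0 |].
  exact: hpath.
have hal2 : al <= 2^-1 := hal1.
have hSh0 := @pred_nbhd R (n + n) (fun i => v i 0) (fun i => s i 0)
    (fun i => dvp i 0) (fun i => dsp i 0) mu dmu heP al muh nr hmu0 hdev hdmu0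
    hnr0 hnr2 hal0 hal2 halnr hmuh.
have hSh : \sum_i (vh i 0 * sh i 0 - muh) ^+ 2 <= (muh / 2) ^+ 2.
  by under eq_bigr => i _ do rewrite vhE shE.
have hx := @from_sum R (n + n) (fun i => vh i 0 * sh i 0) muh hmuh0 hSh.
have heC : forall i, sh i 0 * dvc i 0 + vh i 0 * dsc i 0 = muh - vh i 0 * sh i 0.
  by move=> i; rewrite (newton_comp e2) mul1r.
have hpC : 0 <= \sum_i dvc i 0 * dsc i 0 := newton_dot HT Hpsd hlam e2.
have hcs := @corr_sum R (n + n) (fun i => vh i 0) (fun i => sh i 0)
    (fun i => dvc i 0) (fun i => dsc i 0) muh hmuh0 hx hSh heC.
have hmupE : mu_of v' s' =
    (\sum_i (vh i 0 + dvc i 0) * (sh i 0 + dsc i 0)) / (n + n)%:R.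
  by rewrite mu_ofE; congr (_ / _); apply: eq_bigr => i _; rewrite ev es !mxE.
have [hv' hs' hdev'] := @corr_next R (n + n) hm (fun i => vh i 0) (fun i => sh i 0)
    (fun i => dvc i 0) (fun i => dsc i 0) muh hmuh0 hx hSh heC hpC
    (mu_of v' s') hmupE (fun i => proj1 (hvh i)) (fun i => proj2 (hvh i)).
split.
- by rewrite mulrC.
- exact: hmuh_le.
- rewrite mu_ofE.
  have hn0 : (n%:R : R) != 0 by rewrite pnatr_eq0 -lt0n.
  have -> : (1 - al / 2) ^+ 2 * (16 * n%:R)^-1 * mu =
            ((1 - al / 2) ^+ 2 * mu) / 8 / (n + n)%:R.
    by rewrite natrD; field; rewrite hn0 andbT -natrD pnatr_eq0 -lt0n hm.
  apply: ler_wpM2r; first by rewrite invr_ge0 ltW.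
  apply: le_trans hcs _; lra.
- have v'E : forall i, v' i 0 = vh i 0 + dvc i 0 by move=> i; rewrite ev mxE.
  have s'E : forall i, s' i 0 = sh i 0 + dsc i 0 by move=> i; rewrite es mxE.
  split.
  + by move=> i; rewrite v'E; exact: hv'.
  + by move=> i; rewrite s'E; exact: hs'.
  + by under eq_bigr => i _ do rewrite v'E s'E.
Qed.


Theorem lemma4 (R : rcfType) (n : nat) (hn : (0 < n)%N)
  (H : 'M[R]_n) (h : 'cV[R]_n) (lam : R)
  (z : nat -> 'cV[R]_n) (v s : nat -> 'cV[R]_(n + n))
  (dzp : nat -> 'cV[R]_n) (dvp dsp : nat -> 'cV[R]_(n + n))
  (dzc : nat -> 'cV[R]_n) (dvc dsc : nat -> 'cV[R]_(n + n)) :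
  H^T = H ->
  (forall x : 'cV[R]_n, 0 <= (x^T *m H *m x) 0 0) ->
  0 < lam ->
  Nbhd H h lam (4^-1) (z 0%N) (v 0%N) (s 0%N) ->
  (forall k : nat,
     let muk := mu_of (v k) (s k) in
     let ak := alpha_of muk (dvp k) (dsp k) in
     let zh := z k + ak *: dzp k in
     let vh := v k + ak *: dvp k in
     let sh := s k + ak *: dsp k in
     [/\ newton H lam (z k) (v k) (s k) 0 muk (dzp k) (dvp k) (dsp k),
         newton H lam zh vh sh 1 (mu_of vh sh) (dzc k) (dvc k) (dsc k),
         z k.+1 = zh + dzc k,
         v k.+1 = vh + dvc k &
         s k.+1 = sh + dsc k]) ->
  forall k : nat,
    let muk := mu_of (v k) (s k) in
    let ak := alpha_of muk (dvp k) (dsp k) in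
    let vh := v k + ak *: dvp k in
    let sh := s k + ak *: dsp k in
    [/\ mu_of (dvp k) (dsp k) <= 4^-1 * muk,
        mu_of vh sh <= (1 - ak / 2) ^+ 2 * muk &
        mu_of (dvc k) (dsc k) <= (1 - ak / 2) ^+ 2 * (16 * n%:R)^-1 * muk].
Proof.
move=> HT Hpsd hlam hN0 Hstep.
have Inv0 : Inv (v 0%N) (s 0%N).
  move: hN0; rewrite /Nbhd /Fplus /= => -[[_ _ _ [hv hs]] hb].
  split => //.
  have -> : \sum_i (v 0%N i 0 * s 0%N i 0 - mu_of (v 0%N) (s 0%N)) ^+ 2 =
     enorm (had (v 0%N) (s 0%N) - cst (n + n) (mu_of (v 0%N) (s 0%N))) ^+ 2.
    by rewrite enorm_sq; apply: eq_bigr => i _; rewrite devE.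
  rewrite !expr2; apply: ler_pM => //; try exact: enorm_ge0.
  1,2: by rewrite mulrC in hb.
have hInv : forall k, Inv (v k) (s k).
  elim => [|k IH]; first exact: Inv0.
  have [e1 e2 _ e4 e5] := Hstep k.
  have [_ _ _ hI] := @step R n hn H lam (z k) _ (v k) (s k) (dvp k) (dsp k)
    (dvc k) (dsc k) (v k.+1) (s k.+1) (dzp k) (dzc k) HT Hpsd hlam IH e1 e2 e4 e5.
  exact: hI.
move=> k.
have [e1 e2 _ e4 e5] := Hstep k.
have [c1 c2 c3 _] := @step R n hn H lam (z k) _ (v k) (s k) (dvp k) (dsp k)
    (dvc k) (dsc k) (v k.+1) (s k.+1) (dzp k) (dzc k) HT Hpsd hlam (hInv k) e1 e2 e4 e5.
by split.
Qed.
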